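(* Let $N\ge1$ and $0<b_1<\cdots<b_N$. The set $\mathbf{S}$ of continuous functions $g:\mathbb{R}\to\mathbb{R}$ satisfying $g(w)+g(w+b_1)+\cdots+g(w+b_N)=0$ for all $w\in\mathbb{R}$ is an infinite-dimensional real vector space. Consequently, for any reals $1<a_1<\cdots<a_N$, the space of continuous functions $f:(0,\infty)\to\mathbb{R}$ satisfying $f(x)+f(a_1x)+\cdots+f(a_Nx)=0$ for all $x\in(0,\infty)$ is an infinite-dimensional real vector space. *)

(* Defs.v *)
From Stdlib Require Import Reals.
Open Scope R_scope.

Fixpoint sum_1N (N : nat) (F : nat -> R) : R :=
  match N with
  | O => 0
  | S n => sum_1N n F + F (S n)
  end.

Fixpoint sum_lt (n : nat) (F : nat -> R) : R :=
  match n with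
  | O => 0
  | S m => sum_lt m F + F m
  end.

Definition solS (N : nat) (b : nat -> R) (g : R -> R) : Prop :=
  continuity g /\ forall w : R, g w + sum_1N N (fun i => g (w + b i)) = 0.

(* Continuous f on (0,oo) with f(x) + f(a_1 x) + ... + f(a_N x) = 0 for x > 0.
   Functions are represented as R -> R; only values on (0,oo) matter. *)
Definition solT (N : nat) (a : nat -> R) (f : R -> R) : Prop :=
  (forall x, 0 < x -> continuity_pt f x) /\
  forall x : R, 0 < x -> f x + sum_1N N (fun i => f (a i * x)) = 0.

Definition is_subspace (P : (R -> R) -> Prop) : Prop :=
  P (fun _ => 0) /\
  (forall f g, P f -> P g -> P (fun x => f x + g x)) /\
  (forall (c : R) f, P f -> P (fun x => c * f x)).

Definition lin_indep_on (D : R -> Prop) (n : nat) (F : nat -> R -> R) : Prop :=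
  forall c : nat -> R,
    (forall x, D x -> sum_lt n (fun i => c i * F i x) = 0) ->
    forall i, (i < n)%nat -> c i = 0.

Definition infinite_dim_on (D : R -> Prop) (P : (R -> R) -> Prop) : Prop :=
  forall n : nat, exists F : nat -> R -> R,
    (forall i, (i < n)%nat -> P (F i)) /\ lin_indep_on D n F.

(* Main.v *)
Require Import Defs.
From Stdlib Require Import Reals Lra Lia ZArith.
Open Scope R_scope.

Lemma sum_1N_ext N F G : (forall i, (1 <= i <= N)%nat -> F i = G i) -> sum_1N N F = sum_1N N G.
Proof. induction N; simpl; intros H; auto. rewrite IHN, H; auto; [lia|]. intros; apply H; lia. Qed.
Lemma sum_1N_plus N F G : sum_1N N (fun i => F i + G i) = sum_1N N F + sum_1N N G.
Proof. induction N; simpl; [ring|]. rewrite IHN; ring. Qed.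
Lemma sum_1N_scal N c F : sum_1N N (fun i => c * F i) = c * sum_1N N F.
Proof. induction N; simpl; [ring|]. rewrite IHN; ring. Qed.
Lemma sum_1N_zero N F : (forall i, (1<=i<=N)%nat -> F i = 0) -> sum_1N N F = 0.
Proof. intros H. rewrite (sum_1N_ext N F (fun _ => 0 * 0)); [|intros; rewrite H; auto; ring].
  rewrite sum_1N_scal; ring. Qed.
Lemma sum_1N_cont N (F : nat -> R -> R) x : (forall i, continuity_pt (F i) x) ->
  continuity_pt (fun t => sum_1N N (fun i => F i t)) x.
Proof. intros H; induction N; simpl.
  - apply continuity_pt_const; intros a b; auto.
  - apply (continuity_pt_plus (fun t => sum_1N N (fun i => F i t)) (F (S N))); auto. Qed.

Lemma continuity_pt_id x : continuity_pt (fun u => u) x.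
Proof. exact (derivable_continuous_pt _ _ (derivable_pt_id x)). Qed.

Lemma cont_shift (h : R -> R) c x : continuity h -> continuity_pt (fun u => h (u + c)) x.
Proof. intros H. apply (continuity_pt_comp (fun u => u + c) h); [|apply H].
  apply (continuity_pt_plus (fun u => u) (fun _ => c)); [apply continuity_pt_id|].
  apply continuity_pt_const; intros a b; auto. Qed.

Lemma cont_abs_aff (h : R -> R) c e d : continuity h ->
  continuity (fun t => h ((t + c + e * Rabs (t + d)) / 2)).
Proof. intros H x.
  apply (continuity_pt_comp (fun t => (t + c + e * Rabs (t + d)) / 2) h); [|apply H].
  unfold Rdiv. apply (continuity_pt_mult (fun t => t + c + e * Rabs (t + d)) (fun _ => /2));
   [|apply continuity_pt_const; intros a b; auto].
  apply (continuity_pt_plus (fun t => t + c) (fun t => e * Rabs (t + d))).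
  - apply (continuity_pt_plus (fun u => u) (fun _ => c)); [apply continuity_pt_id|].
    apply continuity_pt_const; intros a b; auto.
  - apply (continuity_pt_mult (fun _ => e) (fun t => Rabs (t + d)));
    [apply continuity_pt_const; intros a b; auto|].
    apply (continuity_pt_comp (fun t => t + d) Rabs); [|apply Rcontinuity_abs].
    apply (continuity_pt_plus (fun u => u) (fun _ => d)); [apply continuity_pt_id|].
    apply continuity_pt_const; intros a b; auto. Qed.

Definition M1 t := (t + 0 + (-1) * Rabs (t + 0)) / 2.
Definition M2 c t := (t + c + 1 * Rabs (t + - c)) / 2.
Definition Aop n (b : nat -> R) (h : R -> R) u := - sum_1N (S n) (fun i => h (u + b i)).
Definition Bop n (b : nat -> R) (h : R -> R) u :=
  - h (u + - b (S n)) - sum_1N n (fun i => h (u + (b i - b (S n)))).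
Definition Phi n b (phi : R -> R) h t := Aop n b h (M1 t) + phi t + Bop n b h (M2 (b (S n)) t).
Fixpoint hs n b phi k : R -> R := match k with O => phi | S k => Phi n b phi (hs n b phi k) end.

Definition good n (b : nat -> R) s phi :=
  0 < s /\ s <= b 1%nat /\ (forall i, (1 <= i <= S n)%nat -> b 1%nat <= b i <= b (S n)) /\
  (forall i, (1 <= i <= n)%nat -> b i + s <= b (S n)) /\ continuity phi /\
  (forall t, t <= 0 \/ b 1%nat <= t -> phi t = 0).

Definition Zr n (b : nat -> R) (h : R -> R) := h 0 = 0 /\ forall i, (1 <= i <= S n)%nat -> h (b i) = 0.

Lemma M1_l t : t <= 0 -> M1 t = t.
Proof. intros; unfold M1; rewrite Rplus_0_r, Rabs_left1; lra. Qed.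
Lemma M1_r t : 0 <= t -> M1 t = 0.
Proof. intros; unfold M1; rewrite Rplus_0_r, Rabs_pos_eq; lra. Qed.
Lemma M2_l c t : t <= c -> M2 c t = c.
Proof. intros; unfold M2; rewrite Rabs_left1; lra. Qed.
Lemma M2_r c t : c <= t -> M2 c t = t.
Proof. intros; unfold M2; rewrite Rabs_pos_eq; lra. Qed.

Section S.
Context (n : nat) (b : nat -> R) (s : R) (phi : R -> R) (G : good n b s phi).

Lemma Aop0 h : Zr n b h -> Aop n b h 0 = 0.
Proof. intros [H0 H]. unfold Aop. rewrite sum_1N_zero; [ring|].
  intros i Hi; rewrite Rplus_0_l; auto. Qed.
Lemma Bop0 h : Zr n b h -> Bop n b h (b (S n)) = 0.
Proof. intros [H0 H]. unfold Bop. rewrite Rplus_opp_r, H0, sum_1N_zero; [ring|].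
  intros i Hi. replace (b (S n) + (b i - b (S n))) with (b i) by ring. apply H; lia. Qed.

Lemma Phi_mid h t : Zr n b h -> 0 <= t <= b (S n) -> Phi n b phi h t = phi t.
Proof. intros HZ Ht. unfold Phi. rewrite M1_r, M2_l by lra. rewrite Aop0, Bop0 by auto; ring. Qed.
Lemma Phi_left h t : Zr n b h -> t <= 0 -> Phi n b phi h t = Aop n b h t.
Proof. destruct G as (?&?&Hb&?&?&Hp).
  intros HZ Ht. unfold Phi. assert (b 1%nat <= b (S n)) by (apply Hb; lia).
  rewrite M1_l, M2_l by lra. rewrite Bop0, Hp by (auto; lra); ring. Qed.
Lemma Phi_right h t : Zr n b h -> b (S n) <= t -> Phi n b phi h t = Bop n b h t.
Proof. destruct G as (?&?&Hb&?&?&Hp).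
  intros HZ Ht. unfold Phi. assert (b 1%nat <= b (S n)) by (apply Hb; lia).
  rewrite M1_r, M2_r by lra. rewrite Aop0, Hp by (auto; lra); ring. Qed.

Lemma hs_Z k : Zr n b (hs n b phi k).
Proof. destruct G as (?&?&Hb&?&?&Hp).
  induction k; simpl.
  - split; [apply Hp; lra|]. intros i Hi; apply Hp; right; apply Hb; auto.
  - split.
    + rewrite Phi_mid; auto; [apply Hp; lra|]. assert (b 1%nat <= b (S n)) by (apply Hb; lia); lra.
    + intros i Hi. rewrite Phi_mid; auto; [apply Hp; right; apply Hb; auto|].
      specialize (Hb i Hi); lra.
Qed.

Lemma Phi_cont h : continuity h -> continuity (Phi n b phi h).
Proof. destruct G as (?&?&Hb&?&Hc&Hp). intros Hh x. unfold Phi.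
  apply (continuity_pt_plus (fun t => Aop n b h (M1 t) + phi t) (fun t => Bop n b h (M2 (b (S n)) t))).
  - apply (continuity_pt_plus (fun t => Aop n b h (M1 t)) phi); [|apply Hc].
    unfold M1. apply (cont_abs_aff (Aop n b h)). intros y. unfold Aop.
    apply (continuity_pt_opp (fun u => sum_1N (S n) (fun i => h (u + b i)))).
    apply (sum_1N_cont _ (fun i u => h (u + b i))). intros; apply cont_shift; auto.
  - unfold M2. apply (cont_abs_aff (Bop n b h)). intros y. unfold Bop.
    apply (continuity_pt_minus (fun u => - h (u + - b (S n))) (fun u => sum_1N n (fun i => h (u + (b i - b (S n)))))).
    + apply (continuity_pt_opp (fun u => h (u + - b (S n)))). apply cont_shift; auto.
    + apply (sum_1N_cont _ (fun i u => h (u + (b i - b (S n))))). intros; apply cont_shift; auto.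
Qed.

Lemma hs_cont k : continuity (hs n b phi k).
Proof. destruct G as (?&?&Hb&?&Hc&Hp). induction k; simpl; auto. apply Phi_cont; auto. Qed.

Definition Ik k t := - (INR k * s) <= t <= b (S n) + INR k * s.

Lemma Phi_agree k h1 h2 : Zr n b h1 -> Zr n b h2 -> (forall t, Ik k t -> h1 t = h2 t) ->
  forall t, Ik (S k) t -> Phi n b phi h1 t = Phi n b phi h2 t.
Proof. destruct G as (Hs&Hs1&Hb&Hn&Hc&Hp). intros Z1 Z2 H t Ht. unfold Ik in *.
  rewrite S_INR in Ht. assert (0 <= INR k) by apply pos_INR.
  assert (b 1%nat <= b (S n)) by (apply Hb; lia).
  destruct (Rle_dec t 0) as [Hl|Hl].
  - rewrite !Phi_left by auto. unfold Aop. f_equal. apply sum_1N_ext. intros i Hi.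
    apply H. specialize (Hb i Hi). nra.
  - destruct (Rle_dec (b (S n)) t) as [Hr|Hr].
    + rewrite !Phi_right by auto. unfold Bop. f_equal; [f_equal; apply H; nra|].
      apply sum_1N_ext. intros i Hi. apply H.
      assert (b 1%nat <= b i) by (apply Hb; lia). specialize (Hn i Hi). nra.
    + rewrite !Phi_mid by (auto; lra). auto.
Qed.

Lemma hs_stab k : forall t, Ik k t -> hs n b phi (S k) t = hs n b phi k t.
Proof. induction k; intros t Ht.
  - simpl. unfold Ik in Ht. simpl in Ht. rewrite Phi_mid; auto; [apply (hs_Z 0)|lra].
  - change (Phi n b phi (hs n b phi (S k)) t = Phi n b phi (hs n b phi k) t).
    apply (Phi_agree k); auto using hs_Z.
Qed.

Lemma Ik_mono k m t : (k <= m)%nat -> Ik k t -> Ik m t.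
Proof. destruct G as (Hs&Hs1&Hb&Hn&Hc&Hp). intros Hkm H. unfold Ik in *.
  apply le_INR in Hkm. nra. Qed.

Lemma hs_stab2 k m t : (k <= m)%nat -> Ik k t -> hs n b phi m t = hs n b phi k t.
Proof. intros Hkm Ht. induction Hkm; auto. rewrite hs_stab; auto. apply (Ik_mono k); auto. Qed.

Definition Kt t := Z.to_nat (up (Rabs t / s)).

Lemma Kt_spec t : Rabs t <= INR (Kt t) * s.
Proof. destruct G as (Hs&_). unfold Kt. destruct (archimed (Rabs t / s)) as [H1 H2].
  assert (0 <= Rabs t / s) by (unfold Rdiv; apply Rmult_le_pos; [apply Rabs_pos|apply Rlt_le, Rinv_0_lt_compat; lra]).
  assert (0 <= up (Rabs t / s))%Z by (apply le_IZR; lra).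
  rewrite INR_IZR_INZ, Z2Nat.id by auto.
  apply Rmult_le_reg_r with (/ s); [apply Rinv_0_lt_compat; lra|].
  rewrite Rmult_assoc, Rinv_r by lra. unfold Rdiv in H1. lra. Qed.

Lemma Ik_abs k t : Rabs t <= INR k * s -> Ik k t.
Proof. destruct G as (Hs&Hs1&Hb&Hn&Hc&Hp). intros H. unfold Ik.
  assert (b 1%nat <= b (S n)) by (apply Hb; lia).
  unfold Rabs in H; destruct (Rcase_abs t); lra. Qed.

Definition gsol t := hs n b phi (Kt t) t.

Lemma gsol_spec m t : Ik m t -> gsol t = hs n b phi m t.
Proof. intros H. unfold gsol. assert (Ik (Kt t) t) by (apply Ik_abs, Kt_spec).
  destruct (Nat.le_ge_cases m (Kt t)).
  - apply hs_stab2; auto.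
  - symmetry; apply hs_stab2; auto.
Qed.

Lemma gsol_phi t : 0 <= t <= b (S n) -> gsol t = phi t.
Proof. intros H. rewrite (gsol_spec 0); auto. unfold Ik; simpl; lra. Qed.

Lemma gsol_cont : continuity gsol.
Proof. destruct G as (Hs&_). intros x. set (m := Kt (Rabs x + 1)).
  apply (continuity_pt_locally_ext (hs n b phi m) gsol 1 x); [lra| |apply hs_cont].
  intros y Hy. symmetry. apply gsol_spec. apply Ik_abs.
  pose proof (Kt_spec (Rabs x + 1)). fold m in H.
  unfold Rdist in Hy. rewrite (Rabs_pos_eq (Rabs x + 1)) in H by (pose proof (Rabs_pos x); lra).
  pose proof (Rabs_triang_inv y x). pose proof (Rabs_triang_inv x y).
  rewrite Rabs_minus_sym in H1. lra. Qed.

Lemma gsol_eq w : gsol w + sum_1N (S n) (fun i => gsol (w + b i)) = 0.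
Proof. destruct G as (Hs&Hs1&Hb&Hn&Hc&Hp). assert (b 1%nat <= b (S n)) by (apply Hb; lia).
  set (m := Kt (Rabs w + b (S n))).
  pose proof (Kt_spec (Rabs w + b (S n))) as Hm. fold m in Hm.
  rewrite (Rabs_pos_eq (Rabs w + b (S n))) in Hm by (pose proof (Rabs_pos w); lra).
  assert (Hin : forall i, (1 <= i <= S n)%nat -> Ik m (w + b i)).
  { intros i Hi. apply Ik_abs. specialize (Hb i Hi).
    pose proof (Rabs_triang w (b i)). rewrite (Rabs_pos_eq (b i)) in H0 by lra. lra. }
  assert (Hw : Ik m w). { apply Ik_abs. pose proof (Rabs_pos w). lra. }
  assert (HS : forall t, Ik m t -> Ik (S m) t) by (intros; apply (Ik_mono m); auto).
  pose proof (hs_Z m) as HZ.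
  destruct (Rle_dec w 0) as [Hl|Hl].
  - rewrite (gsol_spec (S m) w) by auto. cbn [hs]. rewrite Phi_left by auto.
    unfold Aop. rewrite (sum_1N_ext _ (fun i => gsol (w + b i)) (fun i => hs n b phi m (w + b i))).
    + ring.
    + intros i Hi. apply gsol_spec; auto.
  - simpl sum_1N. rewrite (gsol_spec (S m) (w + b (S n))) by (apply HS, Hin; lia). cbn [hs].
    rewrite Phi_right by (auto; lra). unfold Bop.
    replace (w + b (S n) + - b (S n)) with w by ring.
    rewrite (sum_1N_ext n (fun i => gsol (w + b i)) (fun i => hs n b phi m (w + b (S n) + (b i - b (S n))))).
    + rewrite (gsol_spec m w) by auto. ring.
    + intros i Hi. replace (w + b (S n) + (b i - b (S n))) with (w + b i) by ring.
      apply gsol_spec, Hin; lia.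
Qed.

End S.

Definition tent r c t := (r - Rabs (t - c) + Rabs (r - Rabs (t - c))) / 2.

Lemma tent_cont r c : continuity (tent r c).
Proof. intros x. unfold tent.
  assert (Hi : continuity_pt (fun t => r - Rabs (t - c)) x).
  { apply (continuity_pt_minus (fun _ => r) (fun t => Rabs (t - c))).
    - apply continuity_pt_const; intros a b; auto.
    - apply (continuity_pt_comp (fun t => t - c) Rabs); [|apply Rcontinuity_abs].
      apply (continuity_pt_minus (fun u => u) (fun _ => c)); [apply continuity_pt_id|].
      apply continuity_pt_const; intros a b; auto. }
  unfold Rdiv. apply (continuity_pt_mult (fun t => r - Rabs (t - c) + Rabs (r - Rabs (t - c))) (fun _ => /2));
   [|apply continuity_pt_const; intros a b; auto].
  apply (continuity_pt_plus (fun t => r - Rabs (t - c)) (fun t => Rabs (r - Rabs (t - c)))); auto.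
  apply (continuity_pt_comp (fun t => r - Rabs (t - c)) Rabs); auto. apply Rcontinuity_abs. Qed.

Lemma tent_zero r c t : r <= Rabs (t - c) -> tent r c t = 0.
Proof. intros H; unfold tent. rewrite (Rabs_left1 (r - Rabs (t - c))) by lra. lra. Qed.
Lemma tent_c r c : 0 <= r -> tent r c c = r.
Proof. intros H; unfold tent. replace (c - c) with 0 by ring. rewrite Rabs_R0, Rminus_0_r, Rabs_pos_eq by lra. lra. Qed.

Lemma sum_lt_delta m j F : (j < m)%nat -> (forall i, (i < m)%nat -> i <> j -> F i = 0) -> sum_lt m F = F j.
Proof. induction m; intros Hj H; [lia|]. simpl. destruct (Nat.eq_dec j m).
  - subst. assert (sum_lt m F = 0).
    { clear IHm Hj. assert (forall k, (k <= m)%nat -> sum_lt k F = 0); [|apply H0; lia].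
      induction k; intros; simpl; auto. rewrite IHk, H by lia; ring. }
    rewrite H0; ring.
  - rewrite (H m) by lia. rewrite IHm; [ring|lia|]. intros; apply H; lia. Qed.

Lemma mono (N : nat) (b : nat -> R) : (forall i, (1 <= i < N)%nat -> b i < b (S i)) ->
  forall d i, (1 <= i)%nat -> (i + d <= N)%nat -> b i <= b (i + d)%nat /\ ((0 < d)%nat -> b i < b (i + d)%nat).
Proof. intros H. induction d; intros i Hi Hd.
  - rewrite Nat.add_0_r. split; [lra|lia].
  - destruct (IHd i Hi) as [H1 H2]; [lia|]. rewrite Nat.add_succ_r.
    assert (b (i + d)%nat < b (S (i + d))) by (apply H; lia). split; [lra|intros; lra]. Qed.

Lemma part1_dim (n : nat) (b : nat -> R) : 0 < b 1%nat ->
  (forall i, (1 <= i < S n)%nat -> b i < b (S i)) ->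
  forall m, exists F : nat -> R -> R,
    (forall i, (i < m)%nat -> solS (S n) b (F i)) /\ lin_indep_on (fun _ => True) m F.
Proof. intros Hb1 Hinc m.
  pose proof (mono _ _ Hinc) as Mo.
  assert (Hbi : forall i, (1 <= i <= S n)%nat -> b 1%nat <= b i <= b (S n)).
  { intros i Hi. destruct (Mo (i - 1)%nat 1%nat) as [A _]; [lia|lia|].
    destruct (Mo (S n - i)%nat i) as [C _]; [lia|lia|].
    replace (1 + (i - 1))%nat with i in A by lia. replace (i + (S n - i))%nat with (S n) in C by lia. lra. }
  set (s := match n with O => b 1%nat | _ => Rmin (b 1%nat) (b (S n) - b n) end).
  assert (Hs : 0 < s /\ s <= b 1%nat /\ forall i, (1 <= i <= n)%nat -> b i + s <= b (S n)).
  { unfold s; destruct n as [|n'].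
    - split; [lra|split; [lra|intros; lia]].
    - assert (b (S n') < b (S (S n'))) by (apply Hinc; lia).
      split; [apply Rmin_pos; lra|split; [apply Rmin_l|]].
      intros i Hi. pose proof (Rmin_r (b 1%nat) (b (S (S n')) - b (S n'))).
      destruct (Mo (S n' - i)%nat i) as [C _]; [lia|lia|].
      replace (i + (S n' - i))%nat with (S n') in C by lia. lra. }
  destruct Hs as (Hs0 & Hs1 & Hs2).
  set (r := b 1%nat / (2 * INR m + 2)).
  assert (Hm0 : 0 <= INR m) by apply pos_INR.
  assert (Hr : 0 < r) by (unfold r; apply Rdiv_lt_0_compat; lra).
  assert (Hr2 : r * (2 * INR m + 2) = b 1%nat) by (unfold r; field; lra).
  set (cc := fun j => (2 * INR j + 1) * r).
  set (F := fun j => gsol n b s (tent r (cc j))).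
  assert (HG : forall j, (j < m)%nat -> good n b s (tent r (cc j))).
  { intros j Hj. repeat split; auto.
    - apply Hbi; lia.
    - apply Hbi; lia.
    - apply tent_cont.
    - intros t Ht. apply tent_zero. unfold cc.
      assert (INR j + 1 <= INR m) by (rewrite <- S_INR; apply le_INR; lia).
      assert (0 <= INR j) by apply pos_INR.
      destruct Ht.
      + rewrite Rabs_left1 by nra. nra.
      + rewrite Rabs_pos_eq by nra. nra. }
  exists F. split.
  - intros i Hi. split; [apply gsol_cont, HG; auto|]. intros w; apply gsol_eq, HG; auto.
  - intros c Hc j Hj. specialize (Hc (cc j) I).
    rewrite (sum_lt_delta m j) in Hc; auto.
    + unfold F in Hc. rewrite gsol_phi in Hc; auto.
      * rewrite tent_c in Hc by lra. nra.
      * unfold cc. assert (INR j + 1 <= INR m) by (rewrite <- S_INR; apply le_INR; lia).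
        assert (0 <= INR j) by apply pos_INR. assert (b 1%nat <= b (S n)) by (apply Hbi; lia). nra.
    + intros i Hi Hij. unfold F. rewrite gsol_phi; auto.
      * rewrite tent_zero; [ring|]. unfold cc.
        destruct (Nat.lt_total i j) as [Hl|[Hl|Hl]]; [ |lia| ].
        -- assert (INR i + 1 <= INR j) by (rewrite <- S_INR; apply le_INR; lia).
           rewrite Rabs_pos_eq by nra. nra.
        -- assert (INR j + 1 <= INR i) by (rewrite <- S_INR; apply le_INR; lia).
           rewrite Rabs_left1 by nra. nra.
      * unfold cc. assert (INR j + 1 <= INR m) by (rewrite <- S_INR; apply le_INR; lia).
        assert (0 <= INR j) by apply pos_INR. assert (b 1%nat <= b (S n)) by (apply Hbi; lia). nra.
Qed.

Lemma subS N b : is_subspace (solS N b).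
Proof. split; [|split].
  - split; [intros x; apply continuity_pt_const; intros a c; auto|].
    intros w; rewrite sum_1N_zero; auto; ring.
  - intros f g [Cf Ef] [Cg Eg]. split; [intros x; apply (continuity_pt_plus f g); auto|].
    intros w. rewrite (sum_1N_plus N (fun i => f (w + b i)) (fun i => g (w + b i))).
    specialize (Ef w); specialize (Eg w); lra.
  - intros c f [Cf Ef]. split; [intros x; apply (continuity_pt_mult (fun _ => c) f); auto;
      apply continuity_pt_const; intros a d; auto|].
    intros w. rewrite (sum_1N_scal N c (fun i => f (w + b i))). specialize (Ef w).
    replace (c * f w + c * sum_1N N (fun i => f (w + b i))) with (c * (f w + sum_1N N (fun i => f (w + b i)))) by ring.
    rewrite Ef; ring.
Qed.

Lemma subT N a : is_subspace (solT N a).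
Proof. split; [|split].
  - split; [intros x _; apply continuity_pt_const; intros y c; auto|].
    intros w _; rewrite sum_1N_zero; auto; ring.
  - intros f g [Cf Ef] [Cg Eg]. split; [intros x Hx; apply (continuity_pt_plus f g); auto|].
    intros w Hw. rewrite (sum_1N_plus N (fun i => f (a i * w)) (fun i => g (a i * w))).
    specialize (Ef w Hw); specialize (Eg w Hw); lra.
  - intros c f [Cf Ef]. split; [intros x Hx; apply (continuity_pt_mult (fun _ => c) f); auto;
      apply continuity_pt_const; intros y d; auto|].
    intros w Hw. rewrite (sum_1N_scal N c (fun i => f (a i * w))). specialize (Ef w Hw).
    replace (c * f w + c * sum_1N N (fun i => f (a i * w))) with (c * (f w + sum_1N N (fun i => f (a i * w)))) by ring.
    rewrite Ef; ring.
Qed.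

Theorem mainTheorem5 (N : nat) (hN : (1 <= N)%nat) :
  (forall b : nat -> R,
     0 < b 1%nat ->
     (forall i, (1 <= i < N)%nat -> b i < b (S i)) ->
     is_subspace (solS N b) /\ infinite_dim_on (fun _ => True) (solS N b)) /\
  (forall a : nat -> R,
     1 < a 1%nat ->
     (forall i, (1 <= i < N)%nat -> a i < a (S i)) ->
     is_subspace (solT N a) /\ infinite_dim_on (fun x => 0 < x) (solT N a)).
Proof.
  destruct N as [|n]; [lia|]. split.
  - intros b Hb1 Hinc. split; [apply subS|]. intros m. apply part1_dim; auto.
  - intros a Ha1 Hinc. split; [apply subT|]. intros m.
    pose proof (mono _ _ Hinc) as Mo.
    assert (Hapos : forall i, (1 <= i <= S n)%nat -> 0 < a i).
    { intros i Hi. destruct (Mo (i - 1)%nat 1%nat) as [A _]; [lia|lia|].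
      replace (1 + (i - 1))%nat with i in A by lia. lra. }
    set (b := fun i => ln (a i)).
    assert (Hb1 : 0 < b 1%nat). { unfold b. rewrite <- ln_1. apply ln_increasing; lra. }
    assert (Hbinc : forall i, (1 <= i < S n)%nat -> b i < b (S i)).
    { intros i Hi. unfold b. apply ln_increasing; [apply Hapos; lia|apply Hinc; auto]. }
    destruct (part1_dim n b Hb1 Hbinc m) as [F [HF HI]].
    exists (fun i x => F i (ln x)). split.
    + intros i Hi. destruct (HF i Hi) as [Cf Ef]. split.
      * intros x Hx. apply (continuity_pt_comp ln (F i)); [|apply Cf].
        apply derivable_continuous_pt. exact (exist _ (/ x) (derivable_pt_lim_ln x Hx)).
      * intros x Hx. rewrite <- (Ef (ln x)). f_equal. apply sum_1N_ext.
        intros j Hj. unfold b. rewrite ln_mult by (auto; apply Hapos; auto). f_equal; ring.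
    + intros c Hc. apply HI. intros w _. specialize (Hc (exp w) (exp_pos w)).
      simpl in Hc. rewrite <- Hc.
      assert (forall k, sum_lt k (fun i => c i * F i w) = sum_lt k (fun i => c i * F i (ln (exp w)))).
      { induction k; simpl; auto. rewrite IHk, ln_exp; auto. }
      apply H.
Qed.
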